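(* Let $N_T,N_R\ge 1$ be integers, let $\mathcal{R}>0$ and $\beta>0$, and let $\bar\gamma_k>0$. Define $\xi=[2\pi(2^{2\mathcal{R}}-1)]^{-1/2}$, $\tau=2^{\mathcal{R}}-1$, $\varphi_H=\tau+\frac{1}{2\xi\sqrt\beta}$, $\varphi_L=\tau-\frac{1}{2\xi\sqrt\beta}$, and $$F_{\mathrm{MRC}}(\gamma)=\Big\{1-\exp\!\Big(-\frac{\gamma}{\bar\gamma_k}\Big)\sum_{n=0}^{N_R-1}\frac{1}{n!}\Big(\frac{\gamma}{\bar\gamma_k}\Big)^n\Big\}^{N_T}.$$ Then the quantity $\bar\varepsilon_k^{\mathrm{TAS/MRC}}:=\xi\sqrt\beta\int_{\varphi_L}^{\varphi_H}F_{\mathrm{MRC}}(\gamma)\,d\gamma$ equals $$1+\xi\sqrt\beta\sum_{m=1}^{N_T}\binom{N_T}{m}(-1)^m\sum_{j_1=0}^{N_R-1}\cdots\sum_{j_m=0}^{N_R-1}\Big(\prod_{t=1}^m\frac{1}{j_t!}\Big)m^{-\mathcal{S}-1}\bar\gamma_k\Big\{\Upsilon\Big(\mathcal{S}+1,\frac{m\varphi_H}{\bar\gamma_k}\Big)-\Upsilon\Big(\mathcal{S}+1,\frac{m\varphi_L}{\bar\gamma_k}\Big)\Big\},$$ where $\mathcal{S}=\sum_{t=1}^m j_t$ and $\Upsilon(\alpha,z)=\int_0^z e^{-t}t^{\alpha-1}\,dt$ is the lower incomplete gamma function.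
   Context: $F_{\mathrm{MRC}}$ is the CDF of the per-hop SNR $\max_{1\le i\le N_T}\sum_{j=1}^{N_R}\gamma^{(i,j)}$ of transmit antenna selection with maximum ratio combining, where $\gamma^{(i,j)}$ are i.i.d. exponential with mean $\bar\gamma_k$ (Rayleigh fading). The quantity $\bar\varepsilon_k^{\mathrm{TAS/MRC}}$ is the paper's approximation of the average block error rate at hop $k$ in the finite-blocklength regime with coding rate $\mathcal{R}$ and blocklength $\beta$. *)

(* Defs.v *)
From Stdlib Require Import Reals.
From Coquelicot Require Import Coquelicot.
From mathcomp Require Import all_boot.

Open Scope R_scope.

Definition xi (Rc : R) : R := / sqrt (2 * PI * (Rpower 2 (2 * Rc) - 1)).
Definition tau (Rc : R) : R := Rpower 2 Rc - 1.
Definition phiH (Rc beta : R) : R := tau Rc + / (2 * xi Rc * sqrt beta).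
Definition phiL (Rc beta : R) : R := tau Rc - / (2 * xi Rc * sqrt beta).

(* CDF of the TAS/MRC per-hop SNR (Rayleigh fading), as in the paper. *)
Definition F_MRC (NT NR : nat) (gbar : R) (x : R) : R :=
  (1 - exp (- (x / gbar)) *
       \big[Rplus/0]_(n < NR) (/ INR (Factorial.fact n) * (x / gbar) ^ n)) ^ NT.

(* Lower incomplete gamma function Upsilon(a, z) = int_0^z e^{-t} t^(a-1) dt,
   for a positive integer argument a (only integer arguments S+1 occur);
   the power t^(a-1) is the natural-number power, so negative z is allowed. *)
Definition Upsilon (a : nat) (z : R) : R :=
  RInt (fun t => exp (- t) * t ^ (a - 1)) 0 z.

Definition eps_TAS_MRC (NT NR : nat) (Rc beta gbar : R) : R :=
  xi Rc * sqrt beta * RInt (F_MRC NT NR gbar) (phiL Rc beta) (phiH Rc beta).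

(* Main.v *)
From Stdlib Require Import Reals Lra.
From Coquelicot Require Import Coquelicot.
From mathcomp Require Import all_boot all_algebra.
From mathcomp Require Import Rstruct.
Require Import Defs.
Import GRing.Theory.
Open Scope R_scope.
Lemma F_expand NT NR g x :
 F_MRC NT NR g x = 1 + \big[Rplus/0]_(1 <= m < NT.+1) (INR 'C(NT,m) * (-1)^m *
   \big[Rplus/0]_(j : {ffun 'I_m -> 'I_NR})
     ((\big[Rmult/1]_(t<m) / INR (Factorial.fact (j t))) *
      (exp (-(x/g)) ^ m * (x/g) ^ (\sum_(t<m) nat_of_ord (j t))%N))).
Proof.
rewrite /F_MRC.
set u := x / g. set e := exp (- u).
set P := \big[Rplus/0]_(n < NR) _.
rewrite RpowE.
change (1 - e * P) with (GRing.add 1 (GRing.opp (e * P))).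
rewrite exprDn big_ord_recl /= expr1n mul1r expr0 bin0 mulr1n.
rewrite -(add0n 1%N) big_addn big_mkord.
have b0 : forall i, bump 0 i = i.+1 by move=> i; rewrite /bump add1n.
congr (_ + _).
rewrite subSS subn0.
apply: eq_bigr => i _.
rewrite expr1n mul1r b0 addn1.
move: (i : nat).+1 => m.
have pm : forall y : R, (y ^+ m = \prod_(t < m) y)%R.
  by move=> y; elim: m {i} => [|m IH]; rewrite ?big_ord0 ?expr0 // big_ord_recr /= exprSr IH.
rewrite !RpowE !RmultE INRE -mulr_natl -mulrA; congr (_ * _).
rewrite -mulN1r exprMn; congr (_ * _).
have hP : P = \big[GRing.add/GRing.zero]_(n<NR) (/ INR (Factorial.fact n) * u ^ n) by [].
rewrite hP exprMn (pm (\big[GRing.add/GRing.zero]_(n<NR) _)) bigA_distr_bigA mulr_sumr.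
apply: eq_bigr => j _.
have hu : \big[@GRing.mul R/@GRing.one R]_(t < m) (u ^ j t) = GRing.exp u (\sum_(t < m) j t)%N.
  by rewrite -prodrXr; apply: eq_bigr => t _; rewrite RpowE.
rewrite big_split /= hu RpowE RmultE.
by rewrite mulrA (mulrC (e ^+ m)%R) -mulrA.
Qed.
Lemma is_RInt_big (I : eqType) (r : seq I) (P : pred I) (f : I -> R -> R) (v : I -> R) a b :
 (forall i, i \in r -> P i -> is_RInt (f i) a b (v i)) ->
 is_RInt (fun x => \big[Rplus/0]_(i <- r | P i) f i x) a b (\big[Rplus/0]_(i <- r | P i) v i).
Proof.
elim: r => [|i r IH] Hf.
- apply: (is_RInt_ext (fun _ => 0)); first by move=> x _; rewrite big_nil.
  rewrite big_nil.
  have := is_RInt_const a b 0.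
  by rewrite /scal /= /mult /= Rmult_0_r.
- have IH' : is_RInt (fun x => \big[Rplus/0]_(i <- r | P i) f i x) a b (\big[Rplus/0]_(i <- r | P i) v i).
    by apply: IH => k kr; apply: Hf; rewrite in_cons kr orbT.
  rewrite big_cons.
  case Pi: (P i).
  + apply: (is_RInt_ext (fun x => plus (f i x) (\big[Rplus/0]_(i <- r | P i) f i x))).
      by move=> x _; rewrite big_cons Pi.
    apply: is_RInt_plus => //.
    by apply: Hf => //; rewrite in_cons eqxx.
  + apply: (is_RInt_ext (fun x => \big[Rplus/0]_(i <- r | P i) f i x)) => //.
    by move=> x _; rewrite big_cons Pi.
Qed.

Lemma exp_pow_INR a m : exp a ^ m = exp (INR m * a).
Proof.
elim: m => [|m IH]; first by rewrite /= Rmult_0_l exp_0.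
rewrite S_INR Rmult_plus_distr_r Rmult_1_l exp_plus -IH /=; ring.
Qed.

Lemma term_int (m S : nat) g L H : (0 < m)%N -> 0 < g ->
  is_RInt (fun x => exp (-(x/g)) ^ m * (x/g) ^ S) L H
   (/ INR m ^ (S+1) * g * (Upsilon (S+1) (INR m * H / g) - Upsilon (S+1) (INR m * L / g))).
Proof.
move=> m0 g0.
have mpos : 0 < INR m by apply: lt_0_INR; apply/ltP.
set k := INR m / g.
have kpos : 0 < k by apply: Rdiv_lt_0_compat.
set h := fun t => exp (- t) * t ^ S.
have hc : forall z, continuous h z.
  move=> z; apply: ex_derive_continuous; rewrite /h; auto_derive; auto.
have exh : forall a b, ex_RInt h a b.
  by move=> a b; apply: ex_RInt_continuous => z _; apply: hc.
have UE : forall z, Upsilon (S+1) z = RInt h 0 z.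
  move=> z; rewrite /Upsilon /h addnK; reflexivity.
have eL : k * L + 0 = INR m * L / g by rewrite /k; field; lra.
have eH : k * H + 0 = INR m * H / g by rewrite /k; field; lra.
have key : is_RInt h (k*L+0) (k*H+0)
   (Upsilon (S+1) (INR m * H / g) - Upsilon (S+1) (INR m * L / g)).
  rewrite eL eH !UE -(RInt_Chasles h 0 (INR m * L / g) (INR m * H / g)) ?exh //.
  have -> : forall a b : R, plus a b - a = b by move=> a b; rewrite /plus /=; ring.
  by apply: RInt_correct.
have := is_RInt_scal _ L H (/ k / INR m ^ S) _ (is_RInt_comp_lin h k 0 L H _ key).
have mS : INR m ^ S <> 0 by apply: pow_nonzero; lra.
have -> : / INR m ^ (S+1) * g * (Upsilon (S+1) (INR m * H / g) - Upsilon (S+1) (INR m * L / g))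
   = scal (/ k / INR m ^ S) (Upsilon (S+1) (INR m * H / g) - Upsilon (S+1) (INR m * L / g)).
  rewrite /scal /= /mult /= /k pow_add pow_1; field; lra.
apply: is_RInt_ext => y _.
rewrite /scal /= /mult /= /h exp_pow_INR Rplus_0_r.
have -> : k * y = INR m * (y / g) by rewrite /k; field; lra.
rewrite Rpow_mult_distr.
have -> : - (INR m * (y / g)) = INR m * - (y / g) by ring.
field; split; lra.
Qed.

Lemma is_RInt_mulc c f a b v : is_RInt f a b v -> is_RInt (fun x => c * f x) a b (c * v).
Proof. exact: is_RInt_scal. Qed.

Theorem mainTheorem1 (NT NR : nat) (Rc beta gbar : R) :
  (1 <= NT)%nat -> (1 <= NR)%nat -> 0 < Rc -> 0 < beta -> 0 < gbar ->
  eps_TAS_MRC NT NR Rc beta gbar =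
  1 + xi Rc * sqrt beta *
    \big[Rplus/0]_(1 <= m < NT.+1)
      (INR 'C(NT, m) * (-1) ^ m *
       \big[Rplus/0]_(j : {ffun 'I_m -> 'I_NR})
         (let S := (\sum_(t < m) nat_of_ord (j t))%nat in
          (\big[Rmult/1]_(t < m) / INR (Factorial.fact (j t))) *
          / INR m ^ (S + 1) * gbar *
          (Upsilon (S + 1) (INR m * phiH Rc beta / gbar)
           - Upsilon (S + 1) (INR m * phiL Rc beta / gbar)))).
Proof.
move=> hNT hNR hR hb hg.
rewrite /eps_TAS_MRC.
set L := phiL Rc beta; set H := phiH Rc beta.
set V := \big[Rplus/0]_(1 <= m < NT.+1) _.
have HI : is_RInt (F_MRC NT NR gbar) L H ((H - L) + V).
  apply: (is_RInt_ext (fun x => plus 1 (\big[Rplus/0]_(1 <= m < NT.+1) (INR 'C(NT,m) * (-1)^m *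
     \big[Rplus/0]_(j : {ffun 'I_m -> 'I_NR})
     ((\big[Rmult/1]_(t<m) / INR (Factorial.fact (j t))) *
      (exp (-(x/gbar)) ^ m * (x/gbar) ^ (\sum_(t<m) nat_of_ord (j t))%N)))))).
    by move=> x _; rewrite F_expand.
  apply: is_RInt_plus.
    by have := is_RInt_const L H 1; rewrite /scal /= /mult /= Rmult_1_r.
  rewrite /V; apply: is_RInt_big => m; rewrite mem_index_iota => /andP [m1 _] _.
  apply: is_RInt_mulc; apply: is_RInt_big => j _ _.
  cbv beta zeta.
  have := is_RInt_mulc (\big[Rmult/1]_(t < m) / INR (Factorial.fact (j t))) _ _ _ _
    (term_int m (\sum_(t < m) nat_of_ord (j t))%N gbar L H m1 hg).
  by rewrite !Rmult_assoc.
rewrite (is_RInt_unique _ _ _ _ HI).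
have h2 : 1 < Rpower 2 (2*Rc).
  by have := Rpower_lt 2 0 (2*Rc); rewrite Rpower_O; lra.
have xipos : 0 < xi Rc.
  rewrite /xi; apply: Rinv_0_lt_compat; apply: sqrt_lt_R0.
  have := PI_RGT_0; move=> hp; apply: Rmult_lt_0_compat; lra.
have sb : 0 < sqrt beta by apply: sqrt_lt_R0.
rewrite /H /L /phiH /phiL; field; lra.
Qed.
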